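(* Let $F\dashv G$ be a Galois connection between lattices $\mathcal{L}$ and $\mathcal{L}'$, let $\ell\in\mathcal{L}$, and let $L,L'\subseteq\mathcal{L}$ be finite with $L\downarrow\ell=L'\downarrow\ell$. Then $C_{F\dashv G}(L)\downarrow\ell=C_{F\dashv G}(L')\downarrow\ell$.
   Context: A lattice means a partially ordered set with least element $\bot$ in which any two elements have a least upper bound $\sqcup$; $\bigsqcup S$ denotes the least upper bound of a finite set ($\bigsqcup\emptyset=\bot$). For $S\subseteq\mathcal{L}$, $S\downarrow\ell=\{\jmath\in S : \jmath\sqsubseteq\ell\}$. A Galois connection $F\dashv G$ is a pair $F:\mathcal{L}\to\mathcal{L}'$, $G:\mathcal{L}'\to\mathcal{L}$ with $F(\ell)\sqsubseteq\jmath\iff\ell\sqsubseteq G(\jmath)$. For a function $H$, $H^*(S)=\{H(s):s\in S\}$. The closure set is $C(S)=\{\bigsqcup S' : S'\subseteq S\}$ and $C_{F\dashv G}(S)=G^*(C(F^*(S)))$. *)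

(* Defs.v *)
From HB Require Import structures.
From mathcomp Require Import all_boot all_order.
From mathcomp Require Import finmap.
Set Implicit Arguments. Unset Strict Implicit. Unset Printing Implicit Defensive.
Import Order.TTheory.
Local Open Scope order_scope.
Local Open Scope fset_scope.

(* A "lattice" in the paper: a poset with bottom and binary joins:
   bJoinSemilatticeType d. *)

Definition galois_conn {d d' : Order.disp_t}
  {T : bJoinSemilatticeType d} {T' : bJoinSemilatticeType d'}
  (F : T -> T') (G : T' -> T) : Prop :=
  forall (l : T) (j : T'), (F l <= j) = (l <= G j).

Definition down {d} {T : bJoinSemilatticeType d} (S : {fset T}) (l : T) : {fset T} :=
  [fset j in S | j <= l].

Definition closure_set {d} {T : bJoinSemilatticeType d} (S : {fset T}) : {fset T} :=
  [fset (\join_(s <- (S' : {fset T})) s) | S' : {fset T} in fpowerset S].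

Definition closure_FG {d d'} {T : bJoinSemilatticeType d} {T' : bJoinSemilatticeType d'}
  (F : T -> T') (G : T' -> T) (S : {fset T}) : {fset T} :=
  [fset G x | x in closure_set [fset F s | s in S]].

(* Main.v *)
Require Import Defs.
From HB Require Import structures.
From mathcomp Require Import all_boot all_order.
From mathcomp Require Import finmap.
Import Order.TTheory.
Local Open Scope order_scope.
Local Open Scope fset_scope.

Lemma sub_dir (d d' : Order.disp_t)
  (T : bJoinSemilatticeType d) (T' : bJoinSemilatticeType d')
  (F : T -> T') (G : T' -> T) (HFG : galois_conn F G)
  (l : T) (L L' : {fset T}) (HL : down L l = down L' l) :
  down (closure_FG F G L) l `<=` down (closure_FG F G L') l.
Proof.
apply/fsubsetP => z; rewrite !inE /= => /andP[/imfsetP[x /= Hx ->] Hzl].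
rewrite Hzl andbT; apply/imfsetP; exists x => //=.
move: Hx => /imfsetP[S' /= HS' Hx]; rewrite Hx; apply/imfsetP; exists S' => //=.
move: HS'; rewrite !fpowersetE => /fsubsetP HS'; apply/fsubsetP => s Hs.
have := HS' s Hs => /imfsetP[a /= Ha Hsa].
apply/imfsetP; exists a => //=.
have Hal : a <= l.
  apply: le_trans Hzl; rewrite -HFG -Hsa.
  rewrite Hx; exact: (@joins_sup_seq _ _ _ _ predT id _ Hs).
have : a \in down L l by rewrite !inE /= Ha Hal.
by rewrite HL !inE /= => /andP[].
Qed.

Theorem mainTheorem20 (d d' : Order.disp_t)
  (T : bJoinSemilatticeType d) (T' : bJoinSemilatticeType d')
  (F : T -> T') (G : T' -> T) (HFG : galois_conn F G)
  (l : T) (L L' : {fset T}) (HL : down L l = down L' l) :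
  down (closure_FG F G L) l = down (closure_FG F G L') l.
Proof.
apply/eqP; rewrite eqEfsubset; apply/andP; split; apply: sub_dir => //.
Qed.
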